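(* Let $\mu=\prod_{i=1}^d\mu_i$ be a product probability measure on $\mathbb{R}^d$, where $\mathrm{d}\mu_i(x_i)=\rho_i(|x_i|)\,\mathrm{d}x_i$ with $\rho_i:[0,\infty)\to(0,\infty)$ continuous. For $i=1,\dots,d$ let $\phi_i:[0,\infty)\to[0,\infty)$ be continuous and strictly increasing with $\phi_i(0)=0$, and set $B=\{x\in\mathbb{R}^d:\ \phi_1(|x_1|)+\cdots+\phi_d(|x_d|)\le1\}$ (which need not be convex). Then for every $f\in\bar{\mathcal{C}}_d$, $\int f\mathbf{1}_B\,\mathrm{d}\mu\ge\big(\int f\,\mathrm{d}\mu\big)\mu(B)$.
   Context: $\mathcal{C}_1$ denotes the set of continuous compactly supported functions $g:\mathbb{R}\to[0,\infty)$ such that for every $c>0$ the set $\{t: g(t)>c\}$ is convex, and $g(t)\le g(0)$ for all $t\in\mathbb{R}$. $\bar{\mathcal{C}}_d$ denotes the set of continuous compactly supported functions $f:\mathbb{R}^d\to[0,\infty)$ such that for every $i$ and every fixed choice of the other $d-1$ coordinates, the function $x_i\mapsto f(x)$ belongs to $\mathcal{C}_1$. *)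

(* Defs.v *)
From Stdlib Require Export Reals Lra ClassicalEpsilon.
Open Scope R_scope.

(* Points of R^d are represented as x : nat -> R, coordinates 0..d-1 *)
Definition upd (x : nat -> R) (j : nat) (t : R) : nat -> R :=
  fun i => if Nat.eqb i j then t else x i.

(* 1D Riemann integral on [a,b] as a total function (value of RiemannInt
   whenever f is Riemann integrable, which is independent of the proof). *)
Definition RI (f : R -> R) (a b : R) : R :=
  epsilon (inhabits 0)
    (fun I => exists pr : Riemann_integrable f a b, RiemannInt pr = I).

(* Iterated integral over the box [-M,M]^k of coordinates 0..k-1. *)
Fixpoint box_int (k : nat) (M : R) (g : (nat -> R) -> R) (x : nat -> R) : R :=
  match k with
  | O => g x
  | S k' => RI (fun t => box_int k' M g (upd x k' t)) (- M) M
  end.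

(* Integral over R^d : limit of the integrals over [-n,n]^d. *)
Definition full_int (d : nat) (g : (nat -> R) -> R) : R :=
  epsilon (inhabits 0)
    (fun L => Un_cv (fun n => box_int d (INR n) g (fun _ => 0)) L).

Fixpoint sumd (d : nat) (a : nat -> R) : R :=
  match d with O => 0 | S k => sumd k a + a k end.
Fixpoint prodd (d : nat) (a : nat -> R) : R :=
  match d with O => 1 | S k => prodd k a * a k end.

Definition dens (d : nat) (rho : nat -> R -> R) (x : nat -> R) : R :=
  prodd d (fun i => rho i (Rabs (x i))).

Definition mu_int (d : nat) (rho : nat -> R -> R) (g : (nat -> R) -> R) : R :=
  full_int d (fun x => g x * dens d rho x).

Definition indB (d : nat) (phi : nat -> R -> R) (x : nat -> R) : R :=
  if Rle_dec (sumd d (fun i => phi i (Rabs (x i)))) 1 then 1 else 0.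

Definition C1 (g : R -> R) : Prop :=
  continuity g /\
  (exists M, forall t, M < Rabs t -> g t = 0) /\
  (forall t, 0 <= g t) /\
  (forall c, 0 < c -> forall s t u, c < g s -> c < g t -> s <= u <= t -> c < g u) /\
  (forall t, g t <= g 0).

Definition contd (d : nat) (f : (nat -> R) -> R) : Prop :=
  forall x eps, 0 < eps -> exists delta, 0 < delta /\
    forall y, (forall i, (i < d)%nat -> Rabs (y i - x i) < delta) ->
      Rabs (f y - f x) < eps.

Definition Cbar (d : nat) (f : (nat -> R) -> R) : Prop :=
  contd d f /\
  (exists M, forall x, (exists i, (i < d)%nat /\ M < Rabs (x i)) -> f x = 0) /\
  (forall x, 0 <= f x) /\
  (forall i x, (i < d)%nat -> C1 (fun t => f (upd x i t))).

(* Main.v *)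
Require Import Defs.
From Stdlib Require Import Reals Lra Lia FunctionalExtensionality ClassicalEpsilon Classical.
From Coquelicot Require Import Coquelicot.
Open Scope R_scope.

Lemma RI_RInt (f : R -> R) a b : ex_RInt f a b -> RI f a b = RInt f a b.
Proof.
  intro H. unfold RI.
  pose proof (ex_RInt_Reals_0 _ _ _ H) as pr.
  destruct (epsilon_spec (inhabits 0) (fun I => exists pr : Riemann_integrable f a b, RiemannInt pr = I)) as [pr' Hp].
  { exists (RiemannInt pr). exists pr; reflexivity. }
  rewrite <- Hp. symmetry; apply RInt_Reals.
Qed.

Lemma ex_RInt_unif (f : R -> R) a b : a <= b ->
  (forall e, 0 < e -> exists g, ex_RInt g a b /\ forall t, a <= t <= b -> Rabs (f t - g t) <= e) ->
  ex_RInt f a b.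
Proof.
  intros Hab H. apply ex_RInt_Reals_1. intro eps.
  set (e := eps / (2 * (b - a + 1))).
  assert (He : 0 < e). { unfold e. apply Rdiv_lt_0_compat. destruct eps; simpl; lra. lra. }
  assert (He' : e * (b - a + 1) = eps / 2) by (unfold e; field; lra).
  destruct (constructive_indefinite_description _ (H e He)) as [g [Hg Hfg]].
  pose proof (ex_RInt_Reals_0 _ _ _ Hg) as X.
  assert (He2 : 0 < eps/2) by (destruct eps; simpl; lra).
  destruct (X (mkposreal _ He2)) as [phi [psi [H1 H2]]].
  exists phi.
  exists (mkStepFun (StepFun_P28 1 psi (mkStepFun (StepFun_P4 a b e)))).
  split.
  - intros t Ht. simpl. unfold fct_cte.
    rewrite Rmin_left in Ht by lra; rewrite Rmax_right in Ht by lra.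
    specialize (H1 t). rewrite Rmin_left, Rmax_right in H1 by lra.
    specialize (H1 Ht). specialize (Hfg t Ht).
    replace (f t - phi t) with ((f t - g t) + (g t - phi t)) by ring.
    eapply Rle_trans. apply Rabs_triang. lra.
  - rewrite StepFun_P30. rewrite StepFun_P18. simpl in H2 |- *.
    eapply Rle_lt_trans. apply Rabs_triang.
    rewrite Rmult_1_l. rewrite (Rabs_pos_eq (e * (b - a))) by nra.
    assert (e * (b - a) = eps / 2 - e) by (rewrite <- He'; ring). lra.
Qed.

Lemma ex_RInt_Rplus (f g : R -> R) a b : ex_RInt f a b -> ex_RInt g a b -> ex_RInt (fun t => f t + g t) a b.
Proof. intros. exact (ex_RInt_plus f g a b H H0). Qed.
Lemma ex_RInt_Rscal (f : R -> R) a b k : ex_RInt f a b -> ex_RInt (fun t => k * f t) a b.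
Proof. intros. exact (ex_RInt_scal f a b k H). Qed.
Lemma RInt_Rplus (f g : R -> R) a b : ex_RInt f a b -> ex_RInt g a b -> RInt (fun t => f t + g t) a b = RInt f a b + RInt g a b.
Proof. intros. exact (RInt_plus f g a b H H0). Qed.
Lemma RInt_Rscal (f : R -> R) a b k : ex_RInt f a b -> RInt (fun t => k * f t) a b = k * RInt f a b.
Proof. intros. exact (RInt_scal f a b k H). Qed.
Lemma ex_RInt_Rext (f g : R -> R) a b : (forall x, Rmin a b < x < Rmax a b -> f x = g x) -> ex_RInt f a b -> ex_RInt g a b.
Proof. apply ex_RInt_ext. Qed.
Lemma RInt_Rext (f g : R -> R) a b : (forall x, Rmin a b < x < Rmax a b -> f x = g x) -> RInt f a b = RInt g a b.
Proof. apply RInt_ext. Qed.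
Lemma ex_RInt_Rcont (f : R -> R) a b : (forall z, Rmin a b <= z <= Rmax a b -> continuous f z) -> ex_RInt f a b.
Proof. intro H. exact (ex_RInt_continuous (V:=R_CompleteNormedModule) f a b H). Qed.
Lemma ex_RInt_R0 a b : ex_RInt (fun _ : R => 0) a b.
Proof. apply (ex_RInt_const (V:=R_NormedModule)). Qed.
Lemma RInt_R0 a b : RInt (fun _ : R => 0) a b = 0.
Proof. rewrite (RInt_const (V:=R_CompleteNormedModule)). unfold scal; simpl. unfold mult; simpl. ring. Qed.
Lemma RInt_Rconst a b c : RInt (fun _ : R => c) a b = c * (b - a).
Proof. rewrite (RInt_const (V:=R_CompleteNormedModule)). unfold scal; simpl. unfold mult; simpl. ring. Qed.

Lemma ex_RInt_ind_down (w u : R -> R) a b v : a <= b ->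
  (forall z, continuous w z) ->
  (forall s t, a <= s <= t -> t <= b -> u t <= u s) ->
  ex_RInt (fun t => w t * (if Rle_dec v (u t) then 1 else 0)) a b.
Proof.
  intros Hab Hw Hu.
  destruct (Rle_dec v (u a)) as [Ha|Ha].
  2: { apply ex_RInt_Rext with (fun _ => 0).
       - intros x Hx. rewrite Rmin_left, Rmax_right in Hx by lra.
         destruct (Rle_dec v (u x)) as [h|h]; [|ring].
         exfalso. assert (u x <= u a) by (apply Hu; lra). lra.
       - apply ex_RInt_R0. }
  set (E := fun t => a <= t <= b /\ v <= u t).
  assert (Hb : bound E) by (exists b; intros t [Ht _]; lra).
  assert (Hne : exists t, E t) by (exists a; split; [lra|exact Ha]).
  destruct (completeness E Hb Hne) as [tau [Hub Hlub]].
  assert (Hat : a <= tau) by (apply Hub; split; [lra|exact Ha]).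
  assert (Htb : tau <= b) by (apply Hlub; intros t [Ht _]; lra).
  apply ex_RInt_Chasles with tau.
  - apply ex_RInt_Rext with w.
    + intros x Hx. rewrite Rmin_left, Rmax_right in Hx by lra.
      destruct (Rle_dec v (u x)) as [h|h]; [ring|].
      exfalso.
      assert (exists s, E s /\ x < s) as [s [[Hs1 Hs2] Hs3]].
      { apply not_all_not_ex. intro Hn. assert (tau <= x); [|lra]. apply Hlub. intros s Hs.
        destruct (Rle_dec s x); auto. exfalso; apply (Hn s); split; auto; lra. }
      assert (u s <= u x) by (apply Hu; lra). lra.
    + apply ex_RInt_Rcont. intros; apply Hw.
  - apply ex_RInt_Rext with (fun _ => 0).
    + intros x Hx. rewrite Rmin_left, Rmax_right in Hx by lra.
      destruct (Rle_dec v (u x)) as [h|h]; [|ring].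
      exfalso. assert (x <= tau) by (apply Hub; split; [lra|exact h]). lra.
    + apply ex_RInt_R0.
Qed.

Fixpoint lv (N : nat) (c e y : R) : R :=
  match N with O => 0 | S N' => (if Rle_dec (c + e) y then 1 else 0) + lv N' (c + e) e y end.

Lemma lv_zero N : forall c e y, 0 < e -> y < c + e -> lv N c e y = 0.
Proof.
  induction N; intros c e y He Hy; simpl; auto.
  destruct (Rle_dec (c + e) y); [lra|]. rewrite IHN; lra.
Qed.

Lemma lv_approx N : forall c e y, 0 < e -> c <= y <= c + INR N * e ->
  y - e < c + e * lv N c e y <= y.
Proof.
  induction N; intros c e y He Hy.
  - simpl in *. lra.
  - rewrite S_INR in Hy. cbn [lv].
    destruct (Rle_dec (c + e) y) as [h|h].
    + specialize (IHN (c + e) e y He ltac:(lra)). lra.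
    + rewrite lv_zero by lra. lra.
Qed.

Lemma ex_RInt_lv (w u : R -> R) a b e N : a <= b -> (forall z, continuous w z) ->
  (forall s t, a <= s <= t -> t <= b -> u t <= u s) ->
  forall c, ex_RInt (fun t => w t * lv N c e (u t)) a b.
Proof.
  intros Hab Hw Hu. induction N; intro c; simpl.
  - apply ex_RInt_Rext with (fun _ => 0). intros; ring. apply ex_RInt_R0.
  - apply ex_RInt_Rext with (fun t => w t * (if Rle_dec (c + e) (u t) then 1 else 0)
                                   + w t * lv N (c + e) e (u t)).
    + intros; ring.
    + apply ex_RInt_Rplus; auto. apply ex_RInt_ind_down; auto.
Qed.

Lemma ex_RInt_mono_dec (w u : R -> R) a b : a <= b -> (forall z, continuous w z) ->
  (forall s t, a <= s <= t -> t <= b -> u t <= u s) -> ex_RInt (fun t => w t * u t) a b.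
Proof.
  intros Hab Hw Hu.
  destruct (ex_RInt_ub w a b (ex_RInt_Rcont w a b (fun z _ => Hw z))) as [W HW].
  apply ex_RInt_unif; auto.
  intros d Hd.
  set (e := d / (Rabs W + 1)).
  assert (He : 0 < e) by (unfold e; apply Rdiv_lt_0_compat; [lra|pose proof (Rabs_pos W); lra]).
  assert (He' : e * (Rabs W + 1) = d) by (unfold e; field; pose proof (Rabs_pos W); lra).
  destruct (INR_archimed e (u a - u b) ltac:(lra)) as [N HN].
  exists (fun t => w t * (u b + e * lv N (u b) e (u t))).
  split.
  - apply ex_RInt_Rext with (fun t => u b * w t + e * (w t * lv N (u b) e (u t))).
    + intros; ring.
    + apply ex_RInt_Rplus; apply ex_RInt_Rscal.
      * apply ex_RInt_Rcont; intros; apply Hw.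
      * apply ex_RInt_lv; auto.
  - intros t Ht.
    assert (Hut : u b <= u t <= u b + INR N * e).
    { split; [apply Hu; lra|]. assert (u t <= u a) by (apply Hu; lra). lra. }
    pose proof (lv_approx N (u b) e (u t) He Hut) as Ha.
    replace (w t * u t - w t * (u b + e * lv N (u b) e (u t)))
      with (w t * (u t - (u b + e * lv N (u b) e (u t)))) by ring.
    rewrite Rabs_mult.
    assert (Hwt : Rabs (w t) <= W).
    { apply HW. rewrite Rmin_left, Rmax_right by lra. lra. }
    assert (Hd2 : Rabs (u t - (u b + e * lv N (u b) e (u t))) <= e).
    { apply Rabs_le. lra. }
    assert (W <= Rabs W) by apply Rle_abs.
    pose proof (Rabs_pos (w t)). pose proof (Rabs_pos (u t - (u b + e * lv N (u b) e (u t)))).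
    nra.
Qed.

Lemma ex_RInt_mono_inc (w u : R -> R) a b : a <= b -> (forall z, continuous w z) ->
  (forall s t, a <= s <= t -> t <= b -> u s <= u t) -> ex_RInt (fun t => w t * u t) a b.
Proof.
  intros Hab Hw Hu.
  apply ex_RInt_Rext with (fun t => -1 * (w t * (- u t))).
  - intros; ring.
  - apply ex_RInt_Rscal. apply ex_RInt_mono_dec; auto.
    intros s t H1 H2. specialize (Hu s t H1 H2). lra.
Qed.

Definition Uni1 (u : R -> R) := forall s t, 0 <= s <= t -> u t <= u s /\ u (- t) <= u (- s).

Lemma ex_RInt_uni (w u : R -> R) M : 0 <= M -> (forall z, continuous w z) -> Uni1 u ->
  ex_RInt (fun t => w t * u t) (- M) M.
Proof.
  intros HM Hw Hu. apply ex_RInt_Chasles with 0.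
  - apply ex_RInt_mono_inc; [lra|auto|].
    intros s t H1 H2. destruct (Hu (- t) (- s) ltac:(lra)) as [_ H].
    rewrite !Ropp_involutive in H. exact H.
  - apply ex_RInt_mono_dec; [lra|auto|].
    intros s t H1 H2. apply (Hu s t ltac:(lra)).
Qed.

Lemma RInt_sym (f : R -> R) M : ex_RInt f (- M) M -> RInt (fun y => f (- y)) (- M) M = RInt f (- M) M.
Proof.
  intro H.
  assert (H1 : ex_RInt f (-1 * (- M) + 0) (-1 * M + 0)).
  { replace (-1 * (- M) + 0) with M by ring. replace (-1 * M + 0) with (- M) by ring.
    apply ex_RInt_swap; auto. }
  pose proof (RInt_comp_lin f (-1) 0 (- M) M H1) as E.
  replace (-1 * (- M) + 0) with M in E by ring. replace (-1 * M + 0) with (- M) in E by ring.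
  rewrite <- (opp_RInt_swap f) in E by auto.
  assert (H2 : ex_RInt (fun y => f (-1 * y + 0)) (- M) M).
  { apply ex_RInt_Rext with (fun y => -1 * (-1 * f (-1 * y + 0))). intros; ring.
    apply ex_RInt_Rscal. exact (ex_RInt_comp_lin f (-1) 0 (- M) M H1). }
  change (RInt (fun y => -1 * f (-1 * y + 0)) (- M) M = - RInt f (- M) M) in E.
  rewrite RInt_Rscal in E by auto.
  rewrite (RInt_Rext (fun y => f (- y)) (fun y => f (-1 * y + 0))).
  - lra.
  - intros. f_equal. ring.
Qed.

Lemma ex_RInt_sym (f : R -> R) M : ex_RInt f (- M) M -> ex_RInt (fun y => f (- y)) (- M) M.
Proof.
  intro H.
  assert (H1 : ex_RInt f (-1 * (- M) + 0) (-1 * M + 0)).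
  { replace (-1 * (- M) + 0) with M by ring. replace (-1 * M + 0) with (- M) by ring.
    apply ex_RInt_swap; auto. }
  apply ex_RInt_Rext with (fun y => -1 * (-1 * f (-1 * y + 0))).
  - intros. replace (-1 * x + 0) with (- x) by ring. ring.
  - apply ex_RInt_Rscal. exact (ex_RInt_comp_lin f (-1) 0 (- M) M H1).
Qed.

Lemma upd_at x i t : upd x i t i = t.
Proof. unfold upd. rewrite Nat.eqb_refl. reflexivity. Qed.
Lemma upd_other x i j t : i <> j -> upd x j t i = x i.
Proof. intro H. unfold upd. destruct (Nat.eqb_spec i j); [contradiction|reflexivity]. Qed.
Lemma upd_comm x i j s t : i <> j -> upd (upd x i s) j t = upd (upd x j t) i s.
Proof.
  intro H. apply functional_extensionality. intro k. unfold upd.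
  destruct (Nat.eqb_spec k j); destruct (Nat.eqb_spec k i); subst; auto. contradiction.
Qed.
Lemma upd_same x i s t : upd (upd x i s) i t = upd x i t.
Proof.
  apply functional_extensionality. intro k. unfold upd.
  destruct (Nat.eqb_spec k i); auto.
Qed.

Definition Unimod (G : (nat -> R) -> R) j :=
  forall x s t, 0 <= s <= t -> G (upd x j t) <= G (upd x j s) /\ G (upd x j (- t)) <= G (upd x j (- s)).
Definition Ucls k G := forall j, (j < k)%nat -> Unimod G j.
Definition Symc k (G : (nat -> R) -> R) := forall j x t, (j < k)%nat -> G (upd x j (- t)) = G (upd x j t).

Fixpoint L (w : nat -> R -> R) (M : R) (k : nat) (G : (nat -> R) -> R) (x : nat -> R) : R :=
  match k with
  | O => G x
  | S k' => RInt (fun t => w k' t * L w M k' G (upd x k' t)) (- M) M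
  end.

Lemma L_slice w M k : forall G x j s, (k <= j)%nat ->
  L w M k G (upd x j s) = L w M k (fun y => G (upd y j s)) x.
Proof.
  induction k; intros G x j s Hj; simpl; auto.
  f_equal. apply functional_extensionality. intro t. f_equal.
  rewrite upd_comm by lia. apply IHk. lia.
Qed.

Lemma Unimod_slice G j k s : j <> k -> Unimod G j -> Unimod (fun y => G (upd y k s)) j.
Proof.
  intros Hjk H x a b Hab. rewrite !(upd_comm _ j k) by auto. apply H; auto.
Qed.

Lemma Ucls_slice G k k' s : (k <= k')%nat -> Ucls k G -> Ucls k (fun y => G (upd y k' s)).
Proof. intros H HG j Hj. apply Unimod_slice; [lia|]. apply HG; auto. Qed.

Lemma Ucls_weak G k k' : (k' <= k)%nat -> Ucls k G -> Ucls k' G.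
Proof. intros H HG j Hj. apply HG. lia. Qed.

Lemma Unimod_mult G H j : Unimod G j -> Unimod H j -> (forall y, 0 <= G y) -> (forall y, 0 <= H y) ->
  Unimod (fun y => G y * H y) j.
Proof.
  intros HG HH HG0 HH0 x s t Hst.
  destruct (HG x s t Hst) as [a1 a2]. destruct (HH x s t Hst) as [b1 b2].
  split; apply Rmult_le_compat; auto.
Qed.

Lemma Ucls_mult G H k : Ucls k G -> Ucls k H -> (forall y, 0 <= G y) -> (forall y, 0 <= H y) ->
  Ucls k (fun y => G y * H y).
Proof. intros; intros j Hj; apply Unimod_mult; auto. Qed.


Ltac rring := match goal with |- ?a = ?b => change (@eq R a b) end; ring.

Lemma Uni1_plus u v : Uni1 u -> Uni1 v -> Uni1 (fun t => u t + v t).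
Proof. intros Hu Hv s t H. destruct (Hu s t H), (Hv s t H). split; lra. Qed.
Lemma Uni1_refl u : Uni1 u -> Uni1 (fun t => u (- t)).
Proof. intros Hu s t H. destruct (Hu s t H). rewrite !Ropp_involutive. split; auto. Qed.
Lemma Uni1_mult u v : Uni1 u -> Uni1 v -> (forall t, 0 <= u t) -> (forall t, 0 <= v t) ->
  Uni1 (fun t => u t * v t).
Proof.
  intros Hu Hv Hu0 Hv0 s t H. destruct (Hu s t H), (Hv s t H).
  split; apply Rmult_le_compat; auto.
Qed.
Lemma Uni1_sym_le u : Uni1 u -> (forall t, u (- t) = u t) -> forall s t, Rabs s <= Rabs t -> u t <= u s.
Proof.
  intros Hu Hs s t H.
  assert (E : forall r, u r = u (Rabs r)).
  { intro r. unfold Rabs. destruct (Rcase_abs r); [symmetry; apply Hs|reflexivity]. }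
  rewrite (E s), (E t). apply (Hu (Rabs s) (Rabs t)). split; [apply Rabs_pos|auto].
Qed.

Lemma ex_RInt_lin4 (f1 f2 f3 f4 : R -> R) c2 c3 c4 a b :
  ex_RInt f1 a b -> ex_RInt f2 a b -> ex_RInt f3 a b -> ex_RInt f4 a b ->
  ex_RInt (fun s => f1 s + c2 * f2 s + c3 * f3 s + c4 * f4 s) a b.
Proof.
  intros H1 H2 H3 H4.
  pose proof (ex_RInt_Rscal _ _ _ c2 H2) as H2'.
  pose proof (ex_RInt_Rscal _ _ _ c3 H3) as H3'.
  pose proof (ex_RInt_Rscal _ _ _ c4 H4) as H4'.
  pose proof (ex_RInt_Rplus _ _ _ _ H1 H2') as H5.
  pose proof (ex_RInt_Rplus _ _ _ _ H5 H3') as H6.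
  exact (ex_RInt_Rplus _ _ _ _ H6 H4').
Qed.

Lemma RInt_lin4 (f1 f2 f3 f4 : R -> R) c2 c3 c4 a b :
  ex_RInt f1 a b -> ex_RInt f2 a b -> ex_RInt f3 a b -> ex_RInt f4 a b ->
  RInt (fun s => f1 s + c2 * f2 s + c3 * f3 s + c4 * f4 s) a b =
  RInt f1 a b + c2 * RInt f2 a b + c3 * RInt f3 a b + c4 * RInt f4 a b.
Proof.
  intros H1 H2 H3 H4.
  pose proof (ex_RInt_Rscal _ _ _ c2 H2) as H2'.
  pose proof (ex_RInt_Rscal _ _ _ c3 H3) as H3'.
  pose proof (ex_RInt_Rscal _ _ _ c4 H4) as H4'.
  pose proof (ex_RInt_Rplus _ _ _ _ H1 H2') as H5.
  pose proof (ex_RInt_Rplus _ _ _ _ H5 H3') as H6.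
  rewrite (RInt_Rplus _ _ _ _ H6 H4'), (RInt_Rplus _ _ _ _ H5 H3'), (RInt_Rplus _ _ _ _ H1 H2').
  rewrite (RInt_Rscal _ _ _ _ H2), (RInt_Rscal _ _ _ _ H3), (RInt_Rscal _ _ _ _ H4).
  reflexivity.
Qed.

Lemma cheb1 (w g h : R -> R) M : 0 <= M -> (forall z, continuous w z) -> (forall t, 0 <= w t) ->
  (forall t, w (- t) = w t) -> Uni1 g -> (forall t, 0 <= g t) -> Uni1 h -> (forall t, 0 <= h t) ->
  (forall t, h (- t) = h t) ->
  RInt (fun t => w t * g t) (- M) M * RInt (fun t => w t * h t) (- M) M <=
  RInt w (- M) M * RInt (fun t => w t * (g t * h t)) (- M) M.
Proof.
  intros HM Hwc Hw0 Hws Hg Hg0 Hh Hh0 Hhs.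
  pose (gt := fun t => g t + g (- t)).
  assert (Hgt : Uni1 gt) by exact (Uni1_plus _ _ Hg (Uni1_refl _ Hg)).
  assert (Hgt0 : forall t, 0 <= gt t) by (intro t; unfold gt; pose proof (Hg0 t); pose proof (Hg0 (-t)); lra).
  assert (Hgts : forall t, gt (- t) = gt t) by (intro t; unfold gt; rewrite Ropp_involutive; ring).
  assert (I1 : ex_RInt w (-M) M) by (apply ex_RInt_Rcont; intros; apply Hwc).
  pose proof (ex_RInt_uni w g M HM Hwc Hg) as Ig.
  pose proof (ex_RInt_uni w h M HM Hwc Hh) as Ih.
  pose proof (ex_RInt_uni w _ M HM Hwc (Uni1_mult g h Hg Hh Hg0 Hh0)) as Igh.
  pose proof (ex_RInt_uni w gt M HM Hwc Hgt) as Igt.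
  pose proof (ex_RInt_uni w _ M HM Hwc (Uni1_mult gt h Hgt Hh Hgt0 Hh0)) as Igth.
  simpl in Igh, Igth.
  assert (EA : RInt (fun t => w t * (gt t * h t)) (-M) M = 2 * RInt (fun t => w t * (g t * h t)) (-M) M).
  { rewrite (RInt_Rext _ (fun t => w t * (g t * h t) + (fun t => w t * (g t * h t)) (-t))).
    - rewrite (RInt_Rplus _ _ _ _ Igh (ex_RInt_sym (fun t => w t * (g t * h t)) M Igh)).
      rewrite (RInt_sym (fun t => w t * (g t * h t)) M Igh). rring.
    - intros. unfold gt. rewrite Hws, Hhs. ring. }
  assert (EB : RInt (fun t => w t * gt t) (-M) M = 2 * RInt (fun t => w t * g t) (-M) M).
  { rewrite (RInt_Rext _ (fun t => w t * g t + (fun t => w t * g t) (-t))).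
    - rewrite (RInt_Rplus _ _ _ _ Ig (ex_RInt_sym (fun t => w t * g t) M Ig)).
      rewrite (RInt_sym (fun t => w t * g t) M Ig). rring.
    - intros. unfold gt. rewrite Hws. ring. }
  set (m := RInt w (-M) M) in *.
  set (A := RInt (fun t => w t * (gt t * h t)) (-M) M) in *.
  set (B := RInt (fun t => w t * gt t) (-M) M) in *.
  set (C := RInt (fun t => w t * h t) (-M) M) in *.
  assert (Phi : forall t,
    RInt (fun s => w s * ((gt s - gt t) * (h s - h t))) (-M) M = A + (- h t) * B + (- gt t) * C + (gt t * h t) * m).
  { intro t.
    rewrite (RInt_Rext _ (fun s => w s * (gt s * h s) + (- h t) * (w s * gt s) + (- gt t) * (w s * h s) + (gt t * h t) * w s)).
    - exact (RInt_lin4 _ _ _ _ _ _ _ _ _ Igth Igt Ih I1).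
    - intros; ring. }
  assert (Phi0 : forall t, 0 <= RInt (fun s => w s * ((gt s - gt t) * (h s - h t))) (-M) M).
  { intro t. apply RInt_ge_0; [lra| |].
    - apply ex_RInt_Rext with (fun s => w s * (gt s * h s) + (- h t) * (w s * gt s) + (- gt t) * (w s * h s) + (gt t * h t) * w s).
      + intros; ring.
      + exact (ex_RInt_lin4 _ _ _ _ _ _ _ _ _ Igth Igt Ih I1).
    - intros s _. apply Rmult_le_pos; [apply Hw0|].
      destruct (Rle_dec (Rabs s) (Rabs t)) as [Hst|Hst].
      + pose proof (Uni1_sym_le gt Hgt Hgts s t Hst). pose proof (Uni1_sym_le h Hh Hhs s t Hst).
        apply Rmult_le_pos; lra.
      + assert (Hts : Rabs t <= Rabs s) by lra.
        pose proof (Uni1_sym_le gt Hgt Hgts t s Hts). pose proof (Uni1_sym_le h Hh Hhs t s Hts).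
        replace ((gt s - gt t) * (h s - h t)) with ((gt t - gt s) * (h t - h s)) by ring.
        apply Rmult_le_pos; lra. }
  pose proof (ex_RInt_Rscal _ _ _ A I1) as IA.
  assert (Fin : 0 <= RInt (fun t => A * w t + (- B) * (w t * h t) + (- C) * (w t * gt t) + m * (w t * (gt t * h t))) (-M) M).
  { apply RInt_ge_0; [lra| exact (ex_RInt_lin4 _ _ _ _ _ _ _ _ _ IA Ih Igt Igth) |].
    intros t _. specialize (Phi0 t). rewrite Phi in Phi0.
    replace (A * w t + - B * (w t * h t) + - C * (w t * gt t) + m * (w t * (gt t * h t)))
      with (w t * (A + - h t * B + - gt t * C + gt t * h t * m)) by ring.
    apply Rmult_le_pos; auto. }
  rewrite (RInt_lin4 _ _ _ _ _ _ _ _ _ IA Ih Igt Igth) in Fin.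
  rewrite (RInt_Rscal _ _ _ _ I1) in Fin.
  fold m B C A in Fin.
  set (X := RInt (fun t => w t * (g t * h t)) (-M) M) in *.
  set (Y := RInt (fun t => w t * g t) (-M) M) in *.
  assert (E : A * m + - B * C + - C * B + m * A = 4 * (m * X - Y * C)) by (rewrite EA, EB; ring).
  lra.
Qed.
Section Lsec.
Variable w : nat -> R -> R.
Variable d : nat.
Hypothesis Hwc : forall i, (i < d)%nat -> forall z, continuous (w i) z.
Hypothesis Hwp : forall i t, (i < d)%nat -> 0 <= w i t.
Hypothesis Hws : forall i t, (i < d)%nat -> w i (- t) = w i t.

Definition Lmono M k := forall G G', Ucls k G -> Ucls k G' -> (forall y, G y <= G' y) ->
  forall x, L w M k G x <= L w M k G' x.

Lemma L_uni M k : Lmono M k -> forall G, Ucls (S k) G -> forall x,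
  Uni1 (fun t => L w M k G (upd x k t)).
Proof.
  intros Hm G HG x s t Hst. rewrite !L_slice by lia.
  assert (HGk : Unimod G k) by (apply HG; lia).
  split; apply Hm; try (apply Ucls_slice; [lia|]; apply (Ucls_weak _ (S k)); auto);
   intro y; apply (HGk y s t Hst).
Qed.

Lemma L_int M k : 0 <= M -> (k < d)%nat -> Lmono M k -> forall G, Ucls (S k) G -> forall x,
  ex_RInt (fun t => w k t * L w M k G (upd x k t)) (- M) M.
Proof.
  intros HM Hk Hm G HG x. apply ex_RInt_uni; auto. apply L_uni; auto.
Qed.

Lemma L_mono M k : 0 <= M -> (k <= d)%nat -> Lmono M k.
Proof.
  intro HM. induction k; intros Hk G G' HG HG' HGG' x; simpl; auto.
  apply RInt_le; [lra| apply L_int; auto; try lia; apply IHk; lia | apply L_int; auto; try lia; apply IHk; lia |].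
  intros t _. apply Rmult_le_compat_l; [apply Hwp; lia|].
  apply IHk; [lia| apply (Ucls_weak _ (S k)); auto; lia | apply (Ucls_weak _ (S k)); auto; lia | auto].
Qed.

Lemma L_int' M k : 0 <= M -> (k < d)%nat -> forall G, Ucls (S k) G -> forall x,
  ex_RInt (fun t => w k t * L w M k G (upd x k t)) (- M) M.
Proof. intros. apply L_int; auto. apply L_mono; auto; lia. Qed.

Lemma L_uni' M k : 0 <= M -> (k <= d)%nat -> forall G, Ucls (S k) G -> forall x,
  Uni1 (fun t => L w M k G (upd x k t)).
Proof. intros. apply L_uni; auto. apply L_mono; auto. Qed.

Lemma L_nonneg M k : 0 <= M -> (k <= d)%nat -> forall G, Ucls k G -> (forall y, 0 <= G y) ->
  forall x, 0 <= L w M k G x.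
Proof.
  intro HM. induction k; intros Hk G HG HG0 x; simpl; auto.
  apply RInt_ge_0; [lra| apply L_int'; auto; lia |].
  intros t _. apply Rmult_le_pos; [apply Hwp; lia|]. apply IHk; auto; try lia.
  apply (Ucls_weak _ (S k)); auto.
Qed.


Lemma ex_RInt_RCh1 (f : R -> R) a b c : a <= b <= c -> ex_RInt f a c -> ex_RInt f a b.
Proof. intros. exact (ex_RInt_Chasles_1 (V:=R_CompleteNormedModule) f a b c H H0). Qed.
Lemma ex_RInt_RCh2 (f : R -> R) a b c : a <= b <= c -> ex_RInt f a c -> ex_RInt f b c.
Proof. intros. exact (ex_RInt_Chasles_2 (V:=R_CompleteNormedModule) f a b c H H0). Qed.
Lemma RInt_RChasles (f : R -> R) a b c : ex_RInt f a b -> ex_RInt f b c -> RInt f a b + RInt f b c = RInt f a c.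
Proof. intros. exact (RInt_Chasles (V:=R_CompleteNormedModule) f a b c H H0). Qed.

Lemma RInt_split3 (F : R -> R) K M : 0 <= K <= M -> ex_RInt F (-M) M ->
  RInt F (-M) M = RInt F (-M) (-K) + RInt F (-K) K + RInt F K M.
Proof.
  intros HK HF.
  assert (H1 : ex_RInt F (-M) (-K)) by (apply ex_RInt_RCh1 with M; [lra|auto]).
  assert (H2 : ex_RInt F (-K) M) by (apply ex_RInt_RCh2 with (-M); [lra|auto]).
  assert (H3 : ex_RInt F (-K) K) by (apply ex_RInt_RCh1 with M; [lra|auto]).
  assert (H4 : ex_RInt F K M) by (apply ex_RInt_RCh2 with (-K); [lra|auto]).
  rewrite <- (RInt_RChasles F (-M) (-K) M H1 H2).
  rewrite <- (RInt_RChasles F (-K) K M H3 H4). rring.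
Qed.

Lemma RInt_shrink (F : R -> R) K M : 0 <= K <= M -> ex_RInt F (-M) M ->
  (forall t, K < Rabs t -> F t = 0) -> RInt F (-M) M = RInt F (-K) K.
Proof.
  intros HK HF H0. rewrite (RInt_split3 F K M HK HF).
  rewrite (RInt_Rext F (fun _ => 0) (-M) (-K)).
  2: { intros x Hx. rewrite Rmin_left, Rmax_right in Hx by lra. apply H0.
       rewrite Rabs_left by lra. lra. }
  rewrite (RInt_Rext F (fun _ => 0) K M).
  2: { intros x Hx. rewrite Rmin_left, Rmax_right in Hx by lra. apply H0.
       rewrite Rabs_right by lra. lra. }
  rewrite !RInt_R0. rring.
Qed.

Definition Pm M k := prodd k (fun i => RInt (w i) (- M) M).

Lemma L_const M k : 0 <= M -> (k <= d)%nat -> forall x, L w M k (fun _ => 1) x = Pm M k.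
Proof.
  intro HM. induction k; intros Hk x; simpl; auto.
  rewrite (RInt_Rext _ (fun t => Pm M k * w k t)).
  - rewrite (RInt_Rscal _ _ _ _ (ex_RInt_Rcont (w k) (-M) M (fun z _ => Hwc k ltac:(lia) z))).
    unfold Pm; simpl. reflexivity.
  - intros t _. rewrite IHk by lia. ring.
Qed.

Lemma L_cheb M k : 0 <= M -> (k <= d)%nat -> forall G H, Ucls k G -> Ucls k H ->
  (forall y, 0 <= G y) -> (forall y, 0 <= H y) -> Symc k H ->
  forall x, L w M k G x * L w M k H x <= Pm M k * L w M k (fun y => G y * H y) x.
Proof.
  intro HM. induction k; intros Hk G H HG HH HG0 HH0 HHs x.
  - simpl. unfold Pm; simpl. lra.
  - simpl L. unfold Pm; simpl prodd. fold (Pm M k).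
    assert (HGk : Ucls k G) by (apply (Ucls_weak _ (S k)); auto).
    assert (HHk : Ucls k H) by (apply (Ucls_weak _ (S k)); auto).
    assert (HGH : Ucls (S k) (fun y => G y * H y)) by (apply Ucls_mult; auto).
    pose (gg := fun t => L w M k G (upd x k t)).
    pose (hh := fun t => L w M k H (upd x k t)).
    assert (Ugg : Uni1 gg) by (apply L_uni'; auto; lia).
    assert (Uhh : Uni1 hh) by (apply L_uni'; auto; lia).
    assert (gg0 : forall t, 0 <= gg t) by (intro t; apply L_nonneg; auto; lia).
    assert (hh0 : forall t, 0 <= hh t) by (intro t; apply L_nonneg; auto; lia).
    assert (hhs : forall t, hh (- t) = hh t).
    { intro t. unfold hh. rewrite !L_slice by lia. f_equal.
      apply functional_extensionality; intro y. apply HHs. lia. }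
    pose proof (cheb1 (w k) gg hh M HM (Hwc k ltac:(lia)) (fun t => Hwp k t ltac:(lia))
                  (fun t => Hws k t ltac:(lia)) Ugg gg0 Uhh hh0 hhs) as Hc.
    pose proof (L_int' M k HM ltac:(lia) _ HGH x) as Iw.
    pose proof (ex_RInt_uni (w k) _ M HM (Hwc k ltac:(lia)) (Uni1_mult gg hh Ugg Uhh gg0 hh0)) as Igh.
    assert (Hle : RInt (fun t => w k t * (gg t * hh t)) (-M) M <=
                  Pm M k * RInt (fun t => w k t * L w M k (fun y => G y * H y) (upd x k t)) (-M) M).
    { rewrite <- (RInt_Rscal _ _ _ _ Iw).
      apply RInt_le; [lra| exact Igh | exact (ex_RInt_Rscal _ _ _ _ Iw) |].
      intros t _.
      replace (Pm M k * (w k t * L w M k (fun y => G y * H y) (upd x k t)))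
        with (w k t * (Pm M k * L w M k (fun y => G y * H y) (upd x k t))) by ring.
      apply Rmult_le_compat_l; [apply Hwp; lia|]. unfold gg, hh.
      apply IHk; auto; try lia. intros j y s Hj. apply HHs. lia. }
    assert (Hm : 0 <= RInt (w k) (-M) M).
    { apply RInt_ge_0; [lra| apply ex_RInt_Rcont; intros; apply Hwc; lia| intros; apply Hwp; lia]. }
    fold gg hh.
    eapply Rle_trans; [exact Hc|].
    replace (Pm M k * RInt (w k) (- M) M * RInt (fun t => w k t * L w M k (fun y => G y * H y) (upd x k t)) (- M) M)
      with (RInt (w k) (- M) M * (Pm M k * RInt (fun t => w k t * L w M k (fun y => G y * H y) (upd x k t)) (- M) M)) by ring.
    apply Rmult_le_compat_l; auto.
Qed.

Lemma box_L M k : 0 <= M -> (k <= d)%nat -> forall G phi, Ucls k G ->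
  (forall y j s, (j < k)%nat -> phi (upd y j s) = phi y) ->
  forall x, box_int k M (fun y => phi y * (G y * prodd k (fun i => w i (y i)))) x = phi x * L w M k G x.
Proof.
  intro HM. induction k; intros Hk G phi HG Hphi x.
  - simpl. ring.
  - change (RI (fun t => box_int k M (fun y => phi y * (G y * (prodd k (fun i => w i (y i)) * w k (y k)))) (upd x k t)) (- M) M
            = phi x * RInt (fun t => w k t * L w M k G (upd x k t)) (- M) M).
    transitivity (RI (fun t => phi x * (w k t * L w M k G (upd x k t))) (- M) M).
    + f_equal. apply functional_extensionality. intro t.
      replace (fun y => phi y * (G y * (prodd k (fun i => w i (y i)) * w k (y k))))
        with (fun y => (phi y * w k (y k)) * (G y * prodd k (fun i => w i (y i))))
        by (apply functional_extensionality; intro; ring).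
      rewrite IHk; [| lia | apply (Ucls_weak _ (S k)); auto; lia |].
      * rewrite upd_at. rewrite Hphi by lia. ring.
      * intros y j s Hj. rewrite Hphi by lia. rewrite upd_other by lia. reflexivity.
    + rewrite RI_RInt.
      * rewrite (RInt_Rscal _ _ _ _ (L_int' M k HM ltac:(lia) G HG x)). reflexivity.
      * exact (ex_RInt_Rscal _ _ _ _ (L_int' M k HM ltac:(lia) G HG x)).
Qed.

Lemma L_zero M k : forall x, L w M k (fun _ => 0) x = 0.
Proof.
  induction k; intro x; simpl; auto.
  rewrite (RInt_Rext _ (fun _ => 0)). apply RInt_R0. intros; rewrite IHk; ring.
Qed.

Lemma L_support K M k : 0 <= K <= M -> (k <= d)%nat -> forall G, Ucls k G ->
  (forall y j, (j < k)%nat -> K < Rabs (y j) -> G y = 0) ->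
  forall x, L w M k G x = L w K k G x.
Proof.
  intros HKM. induction k; intros Hk G HG HGs x; simpl; auto.
  assert (HGk : Ucls k G) by (apply (Ucls_weak _ (S k)); auto).
  rewrite (RInt_Rext (fun t => w k t * L w M k G (upd x k t)) (fun t => w k t * L w K k G (upd x k t))).
  2: { intros. rewrite IHk; auto; try lia. intros y j Hj. apply HGs. lia. }
  apply RInt_shrink; [lra | |].
  - exact (ex_RInt_uni (w k) _ M ltac:(lra) (Hwc k ltac:(lia)) (L_uni' K k ltac:(lra) ltac:(lia) G HG x)).
  - intros t Ht. rewrite L_slice by lia.
    rewrite (functional_extensionality (fun y => G (upd y k t)) (fun _ => 0)).
    + rewrite L_zero. ring.
    + intro y. apply HGs with k; [lia|]. rewrite upd_at. auto.
Qed.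

Lemma L_monoM M M' k : 0 <= M <= M' -> (k <= d)%nat -> forall G, Ucls k G -> (forall y, 0 <= G y) ->
  forall x, L w M k G x <= L w M' k G x.
Proof.
  intros HMM. induction k; intros Hk G HG HG0 x; simpl; [lra|].
  assert (HGk : Ucls k G) by (apply (Ucls_weak _ (S k)); auto).
  pose proof (ex_RInt_uni (w k) _ M' ltac:(lra) (Hwc k ltac:(lia)) (L_uni' M' k ltac:(lra) ltac:(lia) G HG x)) as I'.
  apply Rle_trans with (RInt (fun t => w k t * L w M' k G (upd x k t)) (-M) M).
  - apply RInt_le; [lra | apply L_int'; auto; lra | apply ex_RInt_RCh2 with (-M'); [lra|]; apply ex_RInt_RCh1 with M'; [lra|auto] |].
    intros t _. apply Rmult_le_compat_l; [apply Hwp; lia|]. apply IHk; auto; lia.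
  - rewrite (RInt_split3 _ M M' ltac:(lra) I').
    assert (F0 : forall t, 0 <= w k t * L w M' k G (upd x k t)).
    { intro t. apply Rmult_le_pos; [apply Hwp; lia|]. apply L_nonneg; auto; try lra; lia. }
    assert (0 <= RInt (fun t => w k t * L w M' k G (upd x k t)) (- M') (- M)).
    { apply RInt_ge_0; [lra| apply ex_RInt_RCh1 with M'; [lra|auto] | auto]. }
    assert (0 <= RInt (fun t => w k t * L w M' k G (upd x k t)) M M').
    { apply RInt_ge_0; [lra| apply ex_RInt_RCh2 with (-M); [lra|]; apply ex_RInt_RCh2 with (-M'); [lra|auto] | auto]. }
    lra.
Qed.

End Lsec.

Lemma cont_w (r : R -> R) : (forall t, 0 <= t -> continue_in r (fun u => 0 <= u) t) ->
  forall z, continuous (fun t => r (Rabs t)) z.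
Proof.
  intros H z. apply continuity_pt_filterlim.
  unfold continuity_pt, continue_in, limit1_in, limit_in in *.
  intros eps Heps.
  destruct (H (Rabs z) (Rabs_pos z) eps Heps) as [alp [Halp Hd]].
  exists alp. split; auto. intros x [_ Hx]. simpl in *.
  destruct (Req_dec (Rabs x) (Rabs z)) as [E|E].
  - rewrite E. unfold R_dist. rewrite Rminus_diag, Rabs_R0. lra.
  - apply Hd. split.
    + split; [apply Rabs_pos| auto].
    + unfold R_dist in *. eapply Rle_lt_trans; [apply Rabs_triang_inv2|]. auto.
Qed.

Lemma C1_uni (g : R -> R) : Defs.C1 g -> Uni1 g.
Proof.
  intro HC. destruct HC as [_ [_ [Hg0 [Hqc Hmax]]]]. unfold Uni1. intros s t Hst. split.
  - destruct (Rle_dec (g t) (g s)) as [h|h]; auto. exfalso.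
    set (c := (g s + g t) / 2).
    assert (Hc : 0 < c) by (unfold c; pose proof (Hg0 s); lra).
    assert (c < g s); [|unfold c in *; lra].
    apply (Hqc c Hc 0 t s); unfold c; try lra. pose proof (Hmax t). lra.
  - destruct (Rle_dec (g (- t)) (g (- s))) as [h|h]; auto. exfalso.
    set (c := (g (- s) + g (- t)) / 2).
    assert (Hc : 0 < c) by (unfold c; pose proof (Hg0 (- s)); lra).
    assert (c < g (- s)); [|unfold c in *; lra].
    apply (Hqc c Hc (- t) 0 (- s)); unfold c; try lra. pose proof (Hmax (- t)). lra.
Qed.

Lemma sumd_le n (a b : nat -> R) : (forall i, (i < n)%nat -> a i <= b i) -> sumd n a <= sumd n b.
Proof.
  induction n; intro H; simpl; [lra|].
  pose proof (H n ltac:(lia)). pose proof (IHn (fun i Hi => H i ltac:(lia))). lra.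
Qed.

Lemma uni_thm_ind (d : nat) (rho phi : nat -> R -> R)
  (Hphi_mono : forall i s t, (i < d)%nat -> 0 <= s -> s < t -> phi i s < phi i t) :
  forall j x s t, (j < d)%nat -> Rabs s <= Rabs t ->
  indB d phi (upd x j t) <= indB d phi (upd x j s).
Proof.
  intros j x s t Hj Hst. unfold indB.
  assert (Hle : sumd d (fun i => phi i (Rabs (upd x j s i))) <= sumd d (fun i => phi i (Rabs (upd x j t i)))).
  { apply sumd_le. intros i Hi. unfold upd. destruct (Nat.eqb_spec i j).
    - subst. destruct (Req_dec (Rabs s) (Rabs t)) as [E|E]; [rewrite E; lra|].
      left. apply Hphi_mono; auto. apply Rabs_pos. lra.
    - lra. }
  destruct (Rle_dec (sumd d (fun i => phi i (Rabs (upd x j t i)))) 1);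
  destruct (Rle_dec (sumd d (fun i => phi i (Rabs (upd x j s i)))) 1); lra.
Qed.

Lemma indB_sym (d : nat) (phi : nat -> R -> R) j x t :
  indB d phi (upd x j (- t)) = indB d phi (upd x j t).
Proof.
  unfold indB.
  replace (fun i => phi i (Rabs (upd x j (- t) i))) with (fun i => phi i (Rabs (upd x j t i))); auto.
  apply functional_extensionality. intro i. unfold upd. destruct (Nat.eqb i j); auto.
  rewrite Rabs_Ropp. auto.
Qed.

Lemma Ucls_const k c : Ucls k (fun _ => c).
Proof. intros j Hj x s t H. lra. Qed.

Lemma ev_const (u : nat -> R) K l : (forall n, (K <= n)%nat -> u n = l) -> Un_cv u l.
Proof.
  intros H eps He. exists K. intros n Hn. rewrite H by lia. unfold R_dist.
  rewrite Rminus_diag, Rabs_R0. lra.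
Qed.

Lemma full_int_lim d g l : Un_cv (fun n => box_int d (INR n) g (fun _ => 0)) l -> full_int d g = l.
Proof.
  intro H. unfold full_int.
  pose proof (epsilon_spec (inhabits 0) (fun L => Un_cv (fun n => box_int d (INR n) g (fun _ => 0)) L)
     (ex_intro _ l H)) as H2.
  exact (UL_sequence _ _ _ H2 H).
Qed.

Lemma RInt_mono_int (F : R -> R) M M' : 0 <= M <= M' -> ex_RInt F (- M') M' -> (forall t, 0 <= F t) ->
  RInt F (- M) M <= RInt F (- M') M'.
Proof.
  intros HM HF H0. rewrite (RInt_split3 F M M' HM HF).
  assert (0 <= RInt F (- M') (- M)).
  { apply RInt_ge_0; [lra| apply ex_RInt_RCh1 with M'; [lra|auto] | auto]. }
  assert (0 <= RInt F M M').
  { apply RInt_ge_0; [lra| apply ex_RInt_RCh2 with (-M); [lra|]; apply ex_RInt_RCh2 with (-M'); [lra|auto] | auto]. }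
  lra.
Qed.

Theorem mainTheorem8 (d : nat) (rho phi : nat -> R -> R)
  (Hrho_pos : forall i t, (i < d)%nat -> 0 <= t -> 0 < rho i t)
  (Hrho_cont : forall i t, (i < d)%nat -> 0 <= t ->
      continue_in (rho i) (fun u => 0 <= u) t)
  (Hrho_prob : forall i, (i < d)%nat ->
      Un_cv (fun n => RI (fun t => rho i (Rabs t)) (- INR n) (INR n)) 1)
  (Hphi_cont : forall i t, (i < d)%nat -> 0 <= t ->
      continue_in (phi i) (fun u => 0 <= u) t)
  (Hphi_nonneg : forall i t, (i < d)%nat -> 0 <= t -> 0 <= phi i t)
  (Hphi_mono : forall i s t, (i < d)%nat -> 0 <= s -> s < t -> phi i s < phi i t)
  (Hphi0 : forall i, (i < d)%nat -> phi i 0 = 0)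
  (f : (nat -> R) -> R) (Hf : Cbar d f) :
  mu_int d rho (fun x => f x * indB d phi x)
    >= mu_int d rho f * mu_int d rho (indB d phi).
Proof.
  pose (w := fun i t => rho i (Rabs t)).
  assert (Hwc : forall i, (i < d)%nat -> forall z, continuous (w i) z).
  { intros i Hi z. apply cont_w. intros t Ht. apply Hrho_cont; auto. }
  assert (Hwp : forall i t, (i < d)%nat -> 0 <= w i t).
  { intros i t Hi. unfold w. left. apply Hrho_pos; auto. apply Rabs_pos. }
  assert (Hws : forall i t, (i < d)%nat -> w i (- t) = w i t).
  { intros. unfold w. rewrite Rabs_Ropp. auto. }
  destruct Hf as [Hfc [[Mf HMf] [Hf0 Hf1]]].
  assert (Uf : Ucls d f).
  { intros j Hj x s t Hst. exact (C1_uni _ (Hf1 j x Hj) s t Hst). }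
  assert (UB : Ucls d (indB d phi)).
  { intros j Hj x s t Hst. split; apply (uni_thm_ind d rho phi Hphi_mono); auto.
    - rewrite !Rabs_pos_eq; lra.
    - rewrite !Rabs_Ropp, !Rabs_pos_eq; lra. }
  assert (SB : Symc d (indB d phi)) by (intros j x t Hj; apply indB_sym).
  assert (B0 : forall y, 0 <= indB d phi y) by (intro y; unfold indB; destruct Rle_dec; lra).
  assert (B1 : forall y, indB d phi y <= 1) by (intro y; unfold indB; destruct Rle_dec; lra).
  assert (UfB : Ucls d (fun y => f y * indB d phi y)) by (apply Ucls_mult; auto).
  pose (a := fun n : nat => L w (INR n) d (fun y => f y * indB d phi y) (fun _ => 0)).
  pose (b := fun n : nat => L w (INR n) d f (fun _ => 0)).
  pose (c := fun n : nat => L w (INR n) d (indB d phi) (fun _ => 0)).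
  pose (m := fun i (n : nat) => RInt (w i) (- INR n) (INR n)).
  assert (Ebox : forall G, Ucls d G -> forall n,
    box_int d (INR n) (fun x => G x * dens d rho x) (fun _ => 0) = L w (INR n) d G (fun _ => 0)).
  { intros G HG n.
    replace (fun x => G x * dens d rho x) with (fun y => (fun _ => 1) y * (G y * prodd d (fun i => w i (y i)))).
    - rewrite (@box_L w d Hwc Hwp (INR n) d (pos_INR n) (Nat.le_refl d) G (fun _ => 1) HG (fun _ _ _ _ => eq_refl)). ring.
    - apply functional_extensionality. intro y. unfold dens, w. ring. }
  destruct (INR_archimed 1 Mf ltac:(lra)) as [K HK]. rewrite Rmult_1_r in HK.
  assert (Hsupp : forall G, Ucls d G -> (forall y, f y = 0 -> G y = 0) -> forall n, (K <= n)%nat ->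
     L w (INR n) d G (fun _ => 0) = L w (INR K) d G (fun _ => 0)).
  { intros G HG HGf n Hn.
    apply (@L_support w d Hwc Hwp (INR K) (INR n) d (conj (pos_INR K) (le_INR K n Hn)) (Nat.le_refl d) G HG).
    intros y j Hj Hy. apply HGf. apply HMf. exists j. split; auto. lra. }
  assert (Ca : Un_cv a (L w (INR K) d (fun y => f y * indB d phi y) (fun _ => 0))).
  { apply ev_const with K. intros n Hn. unfold a. apply Hsupp; auto. intros y Hy. rewrite Hy. ring. }
  assert (Cb : Un_cv b (L w (INR K) d f (fun _ => 0))).
  { apply ev_const with K. intros n Hn. unfold b. apply Hsupp; auto. }
  assert (Hm_cv : forall i, (i < d)%nat -> Un_cv (m i) 1).
  { intros i Hi. specialize (Hrho_prob i Hi).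
    replace (m i) with (fun n : nat => RI (fun t => rho i (Rabs t)) (- INR n) (INR n)); auto.
    apply functional_extensionality. intro n. unfold m. apply RI_RInt.
    apply ex_RInt_Rcont. intros; apply (Hwc i Hi). }
  assert (Hm_gr : forall i, (i < d)%nat -> Un_growing (m i)).
  { intros i Hi n. unfold m. apply RInt_mono_int.
    - split; [apply pos_INR| apply le_INR; lia].
    - apply ex_RInt_Rcont. intros; apply (Hwc i Hi).
    - intro t. apply Hwp; auto. }
  assert (Hm_le : forall i n, (i < d)%nat -> m i n <= 1).
  { intros i n Hi. apply growing_ineq; auto. }
  assert (Hm_ge : forall i n, (i < d)%nat -> 0 <= m i n).
  { intros i n Hi. unfold m. apply RInt_ge_0.
    - pose proof (pos_INR n); lra.
    - apply ex_RInt_Rcont. intros; apply (Hwc i Hi).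
    - intros; apply Hwp; auto. }
  assert (HP : forall k, (k <= d)%nat -> forall n, 0 <= prodd k (fun i => m i n) <= 1).
  { induction k; intros Hk n; simpl; [lra|].
    specialize (IHk ltac:(lia) n). pose proof (Hm_le k n ltac:(lia)). pose proof (Hm_ge k n ltac:(lia)).
    split; [apply Rmult_le_pos; lra|].
    replace 1 with (1 * 1) by ring. apply Rmult_le_compat; lra. }
  assert (HPcv : forall k, (k <= d)%nat -> Un_cv (fun n => prodd k (fun i => m i n)) 1).
  { induction k; intros Hk; simpl.
    - apply ev_const with 0%nat. auto.
    - replace 1 with (1 * 1) by ring.
      apply (CV_mult (fun n => prodd k (fun i => m i n)) (m k)); [apply IHk; lia| apply Hm_cv; lia]. }
  assert (Hcle : forall n, c n <= 1).
  { intro n. unfold c.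
    pose proof (@L_mono w d Hwc Hwp (INR n) d (pos_INR n) (Nat.le_refl d) (indB d phi) (fun _ => 1) UB (Ucls_const d 1) B1 (fun _ => 0)) as H1.
    rewrite (@L_const w d Hwc (INR n) d (pos_INR n) (Nat.le_refl d)) in H1.
    unfold Pm in H1. pose proof (HP d (Nat.le_refl d) n) as H2. unfold m in H2. lra. }
  assert (Hcg : Un_growing c).
  { intro n. unfold c. apply (@L_monoM w d Hwc Hwp); auto.
    split; [apply pos_INR| apply le_INR; lia]. }
  assert (Hcub : has_ub c).
  { exists 1. intros x [n Hn]. rewrite Hn. auto. }
  destruct (growing_cv c Hcg Hcub) as [lc Cc].
  assert (Hineq : forall n, b n * c n <= prodd d (fun i => m i n) * a n).
  { intro n. exact (@L_cheb w d Hwc Hwp Hws (INR n) d (pos_INR n) (Nat.le_refl d) f (indB d phi) Uf UB Hf0 B0 SB (fun _ => 0)). }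
  pose proof (@Rle_cv_lim _ _ _ _ Hineq (CV_mult _ _ _ _ Cb Cc) (CV_mult _ _ _ _ (HPcv d (Nat.le_refl d)) Ca)) as Hfin.
  unfold mu_int.
  rewrite (full_int_lim d _ (L w (INR K) d (fun y => f y * indB d phi y) (fun _ => 0))).
  rewrite (full_int_lim d _ (L w (INR K) d f (fun _ => 0))).
  rewrite (full_int_lim d _ lc).
  - lra.
  - replace (fun n : nat => box_int d (INR n) (fun x => indB d phi x * dens d rho x) (fun _ => 0)) with c; auto.
    apply functional_extensionality. intro n. unfold c. symmetry. apply Ebox; auto.
  - replace (fun n : nat => box_int d (INR n) (fun x => f x * dens d rho x) (fun _ => 0)) with b; auto.
    apply functional_extensionality. intro n. unfold b. symmetry. apply Ebox; auto.
  - replace (fun n : nat => box_int d (INR n) (fun x => f x * indB d phi x * dens d rho x) (fun _ => 0)) with a; auto.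
    apply functional_extensionality. intro n. unfold a. symmetry. apply (Ebox (fun y => f y * indB d phi y)); auto.
Qed.
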